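(* Let $\mathcal F|\mathcal G$ be a biflag of $M$, let $s$ be the number of distinct flats different from $E$ among the flats $F$ of the biflats $F|G\in\mathcal F|\mathcal G$, and let $k\ge0$. (1) If $s+k>r$, then $x_{\mathcal F|\mathcal G}\,\gamma^k=0$ in $A_{M,M^\perp}$. (2) If $s+k=r$ and $\mathcal F$ is not initial, then $x_{\mathcal F|\mathcal G}\,\gamma^k=0$ in $A_{M,M^\perp}$. Here $\mathcal F$ is initial if its $s$ distinct flats different from $E$ have ranks exactly $1,2,\dots,s$ in $M$.
   Context: Let $M$ be a matroid with no loops and no coloops on the ground set $E=\{0,1,\dots,n\}$, of rank $r+1$; $M^\perp$ its dual. A biflat of $M$ is a pair $F|G$ where $F$ is a flat of $M$, $G$ is a flat of $M^\perp$, both are nonempty, they are not both equal to $E$, and $F\cup G=E$. Two biflats $F|G$, $F'|G'$ are compatible if ($F\subseteq F'$ and $G\supseteq G'$) or ($F\supseteq F'$ and $G\subseteq G'$). A biflag is a set of pairwise compatible biflats with $\bigcup_{F|G}(F\cap G)\neq E$. Conormal Chow ring: $S$ is the polynomial ring over $\mathbb R$ in variables $x_{F|G}$, one per biflat; $x_{\mathcal F|\mathcal G}=\prod_{F|G\in\mathcal F|\mathcal G}x_{F|G}$ for a set of biflats. For $i\in E$, $\gamma_i=\sum_{i\in F,\,F\neq E}x_{F|G}$, $\bar\gamma_i=\sum_{i\in G,\,G\neq E}x_{F|G}$. $I$ is generated by the $x_{\mathcal F|\mathcal G}$ for sets of biflats that are not biflags, $J$ by all $\gamma_i-\gamma_j$,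 $\bar\gamma_i-\bar\gamma_j$; $A_{M,M^\perp}=S/(I+J)$, and $\gamma$ is the common class of the $\gamma_i$. *)

(* Defs.v *)
From HB Require Import structures.
From mathcomp Require Import all_boot all_order all_algebra.
From mathcomp Require Import reals.
From mathcomp Require Import mpoly.

Set Implicit Arguments.
Unset Strict Implicit.
Unset Printing Implicit Defensive.
Import GRing.Theory.
Local Open Scope ring_scope.

Definition is_matroid_rank (T : finType) (rk : {set T} -> nat) : Prop :=
  [/\ forall A : {set T}, (rk A <= #|A|)%N,
      forall A B : {set T}, A \subset B -> (rk A <= rk B)%N
    & forall A B : {set T}, (rk (A :|: B) + rk (A :&: B) <= rk A + rk B)%N].

Definition dual_rk (T : finType) (rk : {set T} -> nat) (A : {set T}) : nat :=
  (#|A| + rk (~: A) - rk setT)%N.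

Definition flatb (T : finType) (r : {set T} -> nat) (F : {set T}) : bool :=
  [forall x, (x \notin F) ==> (r F < r (x |: F))%N].

Definition no_loops (T : finType) (rk : {set T} -> nat) : Prop :=
  forall x : T, (0 < rk [set x])%N.

Definition no_coloops (T : finType) (rk : {set T} -> nat) : Prop :=
  forall x : T, (0 < dual_rk rk [set x])%N.

Section Conormal.
Variable n : nat.
Local Notation T := 'I_n.+1.
Variable rk : {set T} -> nat.

Definition biflatb (p : {set T} * {set T}) : bool :=
  [&& flatb rk p.1, flatb (dual_rk rk) p.2, p.1 != set0, p.2 != set0,
      ~~ ((p.1 == setT) && (p.2 == setT)) & (p.1 :|: p.2 == setT)].

Definition biflat : finType := {p : {set T} * {set T} | biflatb p}.

Definition bF (b : biflat) : {set T} := (val b).1.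
Definition bG (b : biflat) : {set T} := (val b).2.

Definition compatible (b c : biflat) : bool :=
  ((bF b \subset bF c) && (bG c \subset bG b)) ||
  ((bF c \subset bF b) && (bG b \subset bG c)).

Definition biflagb (X : {set biflat}) : bool :=
  [forall b in X, forall c in X, compatible b c] &&
  (\bigcup_(b in X) (bF b :&: bG b) != setT).

Definition flats_of (X : {set biflat}) : {set {set T}} :=
  [set bF b | b in X] :\ setT.

Definition initial (X : {set biflat}) : bool :=
  perm_eq [seq rk F | F <- enum (flats_of X)] (iota 1 #|flats_of X|).

Variable R : realType.

Definition Sring := {mpoly R[#|biflat|]}.

Definition xv (b : biflat) : Sring := 'X_(enum_rank b).

Definition xS (X : {set biflat}) : Sring := \prod_(b in X) xv b.

Definition gam (i : T) : Sring :=
  \sum_(b : biflat | (i \in bF b) && (bF b != setT)) xv b.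

Definition gambar (i : T) : Sring :=
  \sum_(b : biflat | (i \in bG b) && (bG b != setT)) xv b.

Definition IJgen (p : Sring) : Prop :=
  (exists X : {set biflat}, ~~ biflagb X /\ p = xS X) \/
  (exists i j : T, p = gam i - gam j) \/
  (exists i j : T, p = gambar i - gambar j).

Definition in_ideal (P : Sring -> Prop) (p : Sring) : Prop :=
  exists s : seq (Sring * Sring),
    (forall q, q \in s -> P q.2) /\ p = \sum_(q <- s) q.1 * q.2.

(* p = 0 in A_{M,M^perp} = S/(I+J) *)
Definition zero_in_A (p : Sring) : Prop := in_ideal IJgen p.

(* gamma = common class of the gamma_i; represented by gamma_0 *)
Definition gamma : Sring := gam ord0.

End Conormal.

(* Main.v *)
Require Import Defs.
From HB Require Import structures.
From mathcomp Require Import all_boot all_order all_algebra.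
From mathcomp Require Import reals.
From mathcomp Require Import mpoly.
Set Implicit Arguments.
Unset Strict Implicit.
Unset Printing Implicit Defensive.
Import GRing.Theory.
Local Open Scope ring_scope.

Lemma ideal0 n (rk : {set 'I_n.+1} -> nat) (R : realType) (P : Sring rk R -> Prop) : in_ideal P 0.
Proof. by exists [::]; split => //; rewrite big_nil. Qed.

Lemma idealD n (rk : {set 'I_n.+1} -> nat) (R : realType) (P : Sring rk R -> Prop) p q :
  in_ideal P p -> in_ideal P q -> in_ideal P (p + q).
Proof.
move=> [s [Hs ->]] [t [Ht ->]]; exists (s ++ t); split; last by rewrite big_cat.
by move=> x; rewrite mem_cat => /orP [/Hs|/Ht].
Qed.

Lemma idealM n (rk : {set 'I_n.+1} -> nat) (R : realType) (P : Sring rk R -> Prop) c p :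
  in_ideal P p -> in_ideal P (c * p).
Proof.
move=> [s [Hs ->]]; exists [seq (c * q.1, q.2) | q <- s]; split.
  by move=> x /mapP [q Hq ->]; apply: (Hs q Hq).
by rewrite big_map mulr_sumr; apply: eq_bigr => q _; rewrite mulrA.
Qed.

Lemma idealMr n (rk : {set 'I_n.+1} -> nat) (R : realType) (P : Sring rk R -> Prop) c p :
  in_ideal P p -> in_ideal P (p * c).
Proof. by rewrite mulrC; apply: idealM. Qed.

Lemma idealG n (rk : {set 'I_n.+1} -> nat) (R : realType) (P : Sring rk R -> Prop) p :
  P p -> in_ideal P p.
Proof.
move=> Hp; exists [:: (1, p)]; split; first by move=> q; rewrite inE => /eqP ->.
by rewrite big_seq1 mul1r.
Qed.

Lemma idealS n (rk : {set 'I_n.+1} -> nat) (R : realType) (P : Sring rk R -> Prop) (I : finType)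
  (Q : pred I) (F : I -> Sring rk R) :
  (forall i, Q i -> in_ideal P (F i)) -> in_ideal P (\sum_(i | Q i) F i).
Proof.
move=> H; apply: (big_ind (in_ideal P)) => //; [exact: ideal0 | exact: idealD].
Qed.

Definition monoR (T : finType) (rk : {set T} -> nat) :=
  forall A B : {set T}, A \subset B -> (rk A <= rk B)%N.

Lemma flat_lt (T : finType) (rk : {set T} -> nat) (F G : {set T}) :
  monoR rk -> flatb rk F -> F \proper G -> (rk F < rk G)%N.
Proof.
move=> Hm /forallP Hf /properP [sFG [x xG xF]].
have := Hf x; rewrite xF /= => H; apply: (leq_trans H); apply: Hm.
by rewrite subUset sub1set xG sFG.
Qed.

Lemma mem_flats n (rk : {set 'I_n.+1} -> nat) (X : {set biflat rk}) F :
  F \in flats_of X -> [/\ F != setT, flatb rk F, F != set0 &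
                         exists2 b, b \in X & F = bF b].
Proof.
rewrite /flats_of !inE => /andP [FT /imsetP [b bX eF]]; subst F.
have /andP [f1 /and5P [f2 f3 f4 f5 f6]] := valP b.
by split => //; exists b.
Qed.

Lemma biflag_compat n (rk : {set 'I_n.+1} -> nat) (X : {set biflat rk}) b c :
  biflagb X -> b \in X -> c \in X -> compatible b c.
Proof.
by case/andP => /forallP H _ bX cX; have /implyP/(_ bX)/forallP/(_ c)/implyP := H b; apply.
Qed.

Lemma compatF n (rk : {set 'I_n.+1} -> nat) (b c : biflat rk) :
  compatible b c -> (bF b \subset bF c) || (bF c \subset bF b).
Proof. by case/orP => /andP [-> _] //; rewrite orbT. Qed.

Lemma flats_chain n (rk : {set 'I_n.+1} -> nat) (X : {set biflat rk}) F G :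
  biflagb X -> F \in flats_of X -> G \in flats_of X ->
  (F \subset G) || (G \subset F).
Proof.
move=> HX /mem_flats [_ _ _ [b bX ->]] /mem_flats [_ _ _ [c cX ->]].
exact/compatF/(biflag_compat HX).
Qed.

Lemma rk_inj n (rk : {set 'I_n.+1} -> nat) (X : {set biflat rk}) :
  monoR rk -> biflagb X -> {in flats_of X &, injective rk}.
Proof.
move=> Hm HX F G HF HG /eqP Hr.
have [_ fF _ _] := mem_flats HF; have [_ fG _ _] := mem_flats HG.
case/orP: (flats_chain HX HF HG) => sub.
  apply/eqP; apply: contraTT Hr => ne; rewrite neq_ltn.
  by rewrite (flat_lt Hm fF) // properEneq ne sub.
apply/eqP; apply: contraTT Hr => ne; rewrite neq_ltn.
by rewrite (flat_lt Hm fG) ?orbT // properEneq eq_sym ne sub.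
Qed.

Lemma rk_bounds n (rk : {set 'I_n.+1} -> nat) r (F : {set 'I_n.+1}) :
  monoR rk -> no_loops rk -> rk setT = r.+1 ->
  F != setT -> flatb rk F -> F != set0 -> (1 <= rk F <= r)%N.
Proof.
move=> Hm Hl Hr FT fF F0; apply/andP; split.
  case/set0Pn: F0 => x xF; apply: leq_trans (Hl x) _; apply: Hm; by rewrite sub1set.
rewrite -ltnS -Hr; apply: flat_lt => //; by rewrite properEneq FT subsetT.
Qed.

Lemma card_flats n (rk : {set 'I_n.+1} -> nat) r (X : {set biflat rk}) :
  monoR rk -> no_loops rk -> rk setT = r.+1 -> biflagb X ->
  (#|flats_of X| <= r)%N.
Proof.
move=> Hm Hl Hr HX.
have -> : #|flats_of X| = size [seq rk F | F <- enum (flats_of X)].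
  by rewrite size_map cardE.
rewrite -(size_iota 1 r); apply: uniq_leq_size.
  rewrite map_inj_in_uniq ?enum_uniq //.
  by move=> F G; rewrite !mem_enum; apply: rk_inj.
move=> m /mapP [F]; rewrite mem_enum => HF ->.
have [FT fF F0 _] := mem_flats HF.
by rewrite mem_iota add1n ltnS; apply: rk_bounds.
Qed.

Lemma noninit n (rk : {set 'I_n.+1} -> nat) r (X : {set biflat rk}) :
  monoR rk -> no_loops rk -> rk setT = r.+1 -> biflagb X -> ~~ initial X ->
  exists2 F, F \in flats_of X & (#|flats_of X| < rk F)%N.
Proof.
move=> Hm Hl Hr HX Hni.
case: (pickP (fun F => (F \in flats_of X) && (#|flats_of X| < rk F)%N)).
  by move=> F /andP [HF Hlt]; exists F.
move=> Hall; exfalso; move/negP: Hni; apply.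
rewrite /initial; apply: uniq_perm.
- rewrite map_inj_in_uniq ?enum_uniq //.
  by move=> F G; rewrite !mem_enum; apply: rk_inj.
- exact: iota_uniq.
have Hsub : {subset [seq rk F | F <- enum (flats_of X)] <= iota 1 #|flats_of X|}.
  move=> m /mapP [F]; rewrite mem_enum => HF ->.
  have [FT fF F0 _] := mem_flats HF.
  have := Hall F; rewrite HF /= => /negbT; rewrite -leqNgt => Hle.
  have /andP [H1 _] := rk_bounds Hm Hl Hr FT fF F0.
  by rewrite mem_iota add1n ltnS H1.
have := uniq_min_size _ Hsub; case.
- rewrite map_inj_in_uniq ?enum_uniq //.
  by move=> F G; rewrite !mem_enum; apply: rk_inj.
- by rewrite size_iota size_map cardE.
by move=> _.
Qed.

Lemma exists_out n (rk : {set 'I_n.+1} -> nat) (X : {set biflat rk}) :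
  monoR rk -> biflagb X -> exists i, forall G, G \in flats_of X -> i \notin G.
Proof.
move=> Hm HX; case: (set_0Vmem (flats_of X)) => [-> | [F0 HF0]].
  by exists ord0 => G; rewrite inE.
case: (@arg_maxnP _ F0 (mem (flats_of X)) rk HF0) => F1 HF1 Hmax.
have [F1T fF1 _ _] := mem_flats HF1.
have [i iF1] : exists i, i \notin F1.
  apply/existsP; apply: contraNT F1T => /existsPn H.
  by apply/eqP/setP => x; rewrite inE; have := H x; rewrite negbK.
exists i => G HG; apply: contra iF1 => iG.
case/orP: (flats_chain HX HG HF1) => [/subsetP -> // | sub].
have [eq|ne] := eqVneq F1 G; first by subst.
have := flat_lt Hm fF1 (_ : F1 \proper G); rewrite properEneq ne sub => /(_ isT).
have HH : (rk G <= rk F1)%N := Hmax G HG.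
by move=> H; move: HH; rewrite leqNgt H.
Qed.

Lemma key n (rk : {set 'I_n.+1} -> nat) (R : realType) r :
  monoR rk -> no_loops rk -> rk setT = r.+1 ->
  forall k (X : {set biflat rk}), biflagb X ->
  ((r < #|flats_of X| + k)%N \/ ((#|flats_of X| + k)%N = r /\
     exists2 F, F \in flats_of X & (#|flats_of X| < rk F)%N)) ->
  zero_in_A (xS R X * gamma rk R ^+ k).
Proof.
move=> Hm Hl Hr; elim=> [|k IH] X HX Hc.
  exfalso; have Hs := card_flats Hm Hl Hr HX; rewrite addn0 in Hc.
  case: Hc => [H | [Hs' [F HF HlF]]]; first by move: H; rewrite ltnNge Hs.
  have [FT fF F0 _] := mem_flats HF.
  have /andP [_ H2] := rk_bounds Hm Hl Hr FT fF F0.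
  by move: HlF; rewrite Hs' ltnNge H2.
have [i Hi] := exists_out Hm HX.
have -> : xS R X * gamma rk R ^+ k.+1 =
   (gamma rk R - gam rk R i) * (xS R X * gamma rk R ^+ k) +
   (xS R X * gam rk R i) * gamma rk R ^+ k.
  rewrite exprS mulrBl [gam rk R i * _]mulrCA -[xS R X * gam rk R i * _]mulrA subrK.
  by rewrite mulrCA.
apply: idealD.
  apply: idealMr; apply: idealG; right; left; by exists ord0, i.
rewrite /gam mulr_sumr mulr_suml; apply: idealS => b /andP [ib bT].
have bX : b \notin X.
  apply/negP => bX.
  have : bF b \in flats_of X by rewrite /flats_of !inE bT /= imset_f.
  by move/Hi; rewrite ib.
have -> : xS R X * xv R b = xS R (b |: X) by rewrite /xS big_setU1 //= mulrC.
have [HbX|nHbX] := boolP (biflagb (b |: X)); last first.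
  apply: idealMr; apply: idealG; left; by exists (b |: X).
apply: IH => //.
have sub : forall F, F \in flats_of X -> F \proper bF b.
  move=> F HF; have [_ _ _ [c cX eF]] := mem_flats HF; subst F.
  have := compatF (biflag_compat HbX (setU11 b X) (setU1r b cX)).
  rewrite properEneq; case/orP => sub.
    by move: (Hi _ HF); rewrite (subsetP sub i ib).
  rewrite sub andbT; apply/eqP => e; move: (Hi _ HF); by rewrite e ib.
have eqfl : flats_of (b |: X) = bF b |: flats_of X.
  apply/setP => F; rewrite /flats_of imsetU1 !inE.
  case: (eqVneq F (bF b)) => [-> | ne] /=; first by rewrite bT.
  by [].
have bnot : bF b \notin flats_of X by apply/negP => /Hi; rewrite ib.
have card : #|flats_of (b |: X)| = (#|flats_of X|).+1.
  by rewrite eqfl cardsU1 bnot.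
rewrite card; case: Hc => [H|[Hs [F HF HlF]]]; [left | right].
  by rewrite addSnnS.
split; first by rewrite addSnnS.
exists (bF b); first by rewrite eqfl setU11.
have [_ fF _ _] := mem_flats HF.
exact: leq_ltn_trans HlF (flat_lt Hm fF (sub F HF)).
Qed.

Theorem mainTheorem10 (R : realType) (n r : nat) (rk : {set 'I_n.+1} -> nat) :
  is_matroid_rank rk -> no_loops rk -> no_coloops rk -> rk setT = r.+1 ->
  forall X : {set biflat rk}, biflagb X ->
  forall k : nat,
    ((r < #|flats_of X| + k)%N -> zero_in_A (xS R X * (@gamma n rk R) ^+ k)) /\
    ((#|flats_of X| + k)%N = r -> ~~ initial X ->
       zero_in_A (xS R X * (@gamma n rk R) ^+ k)).
Proof.
move=> [_ Hm _] Hl _ Hr X HX k; split.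
  by move=> H; apply: (@key n rk R r Hm Hl Hr k X HX); left.
move=> H Hni; apply: (@key n rk R r Hm Hl Hr k X HX); right; split => //.
exact: noninit Hm Hl Hr HX Hni.
Qed.
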